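(* Let $G$ be a group with a finite restricted triangular presentation $\langle S\mid R\rangle$, and let $L=\mathrm{Lk}(v[e],Flag(G,S))$. Then every embedded cycle of length $5$ in $L$ has a diagonal.
   Context: Let $G$ be a group, $S\subset G$ a finite generating set with $S\cap S^{-1}=\emptyset$. The Cayley graph $\Gamma(G,S)$ has vertices $v[g]$, $g\in G$, and a directed edge from $v[g]$ to $v[gs]$ for each $g\in G,s\in S$; $Flag(G,S)$ is its flag complex (a simplex for every finite set of pairwise adjacent vertices). A presentation $\langle S\mid R\rangle$ of $G$ is a restricted triangular presentation if: $S\cap S^{-1}=\emptyset$; $R=\{a\cdot b\cdot c^{-1}\mid a,b,c\in S,\ abc^{-1}=e\text{ in }G\}$ and $\langle S\mid R\rangle$ presents $G$; there are no $a,b,c\in S$ with $abc=e$ in $G$; and for $a,b,c\in S$, $abc\in S$ implies $ab\in S$ and $bc\in S$. The link of a simplex $\sigma$ in $X$ is $\mathrm{Lk}(\sigma,X)=\{\tau\in X\mid \tau\cap\sigma=\emptyset,\ \tau\cup\sigma\in X\}$. Concretely, $L$ has vertices $v[s]$, $s\in S\cup S^{-1}$, and an edge, oriented from $v[g]$ to $v[ga]$, whenever $g, ga\in S\cup S^{-1}$ with $a\in S$. An embedded cycle is an injective simplicial image of a triangulated circle; its length is its number of edges; a diagonal is an edge joining two nonconsecutive vertices of the cycle. *)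

(* Defs.v *)
From Stdlib Require Import List Arith.
Import ListNotations.

Record Group := {
  carrier :> Type;
  gmul : carrier -> carrier -> carrier;
  ginv : carrier -> carrier;
  gone : carrier;
  gmul_assoc : forall x y z, gmul x (gmul y z) = gmul (gmul x y) z;
  gmul_1l : forall x, gmul gone x = x;
  gmul_Vl : forall x, gmul (ginv x) x = gone
}.

Arguments gmul {g}.
Arguments ginv {g}.
Arguments gone {g}.

Definition is_hom (G H : Group) (phi : G -> H) : Prop :=
  forall x y : G, phi (gmul x y) = gmul (phi x) (phi y).

(* The finite set S is represented by a list of elements of G (membership
   via [In]). *)

(* <S | R> presents G, where R = { a b c^{-1} | a,b,c in S, a b c^{-1} = e in G },
   stated via the universal property of the presented group (with the
   generators sent to themselves): every assignment of the generators in a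
   group H satisfying all relators of R extends uniquely to a homomorphism
   G -> H. *)
Definition presents_triangular (G : Group) (S : list G) : Prop :=
  forall (H : Group) (f : G -> H),
    (forall a b c, In a S -> In b S -> In c S ->
       gmul (gmul a b) (ginv c) = gone ->
       gmul (gmul (f a) (f b)) (ginv (f c)) = gone) ->
    exists phi : G -> H,
      is_hom G H phi /\ (forall s, In s S -> phi s = f s) /\
      (forall psi : G -> H, is_hom G H psi ->
         (forall s, In s S -> psi s = f s) -> forall x, psi x = phi x).

Definition restricted_triangular (G : Group) (S : list G) : Prop :=
  (forall a b, In a S -> In b S -> a <> ginv b) /\
  presents_triangular G S /\
  (forall a b c, In a S -> In b S -> In c S -> gmul (gmul a b) c <> gone) /\
  (forall a b c, In a S -> In b S -> In c S -> In (gmul (gmul a b) c) S ->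
     In (gmul a b) S /\ In (gmul b c) S).

(* Vertices of L = Lk(v[e], Flag(G,S)): v[s] for s in S cup S^{-1}. *)
Definition link_vertex (G : Group) (S : list G) (g : G) : Prop :=
  exists s, In s S /\ (g = s \/ g = ginv s).

(* Edges of L: {v[g], v[g a]} with g, g a in S cup S^{-1} and a in S
   (considered as undirected edges). *)
Definition link_edge (G : Group) (S : list G) (g h : G) : Prop :=
  link_vertex G S g /\ link_vertex G S h /\
  exists a, In a S /\ (h = gmul g a \/ g = gmul h a).

Definition embedded_cycle (G : Group) (S : list G) (n : nat) (c : nat -> G) : Prop :=
  3 <= n /\
  (forall i, i < n -> link_vertex G S (c i)) /\
  (forall i j, i < n -> j < n -> c i = c j -> i = j) /\
  (forall i, i < n -> link_edge G S (c i) (c ((i + 1) mod n))).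

Definition has_diagonal (G : Group) (S : list G) (n : nat) (c : nat -> G) : Prop :=
  exists i j, i < n /\ j < n /\ i <> j /\
    j <> (i + 1) mod n /\ i <> (j + 1) mod n /\
    link_edge G S (c i) (c j).

(* Main.v *)
Require Import Defs.
From Stdlib Require Import List Arith Lia Classical.

Section Aux.
Variable G : Group.

Lemma lcancel (a x y : G) : gmul a x = gmul a y -> x = y.
Proof.
  intro H. rewrite <- (gmul_1l G x), <- (gmul_1l G y), <- (gmul_Vl G a),
    <- !gmul_assoc, H. reflexivity.
Qed.

Lemma mulV (x : G) : gmul x (ginv x) = gone.
Proof.
  set (y := gmul x (ginv x)).
  assert (Hy : gmul y y = y).
  { unfold y. rewrite gmul_assoc, <- (gmul_assoc _ x (ginv x) x), gmul_Vl.
    rewrite <- gmul_assoc, gmul_1l. reflexivity. }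
  transitivity (gmul gone y); [symmetry; apply gmul_1l|].
  rewrite <- (gmul_Vl G y) at 1. rewrite <- gmul_assoc, Hy. apply gmul_Vl.
Qed.

Lemma mul1 (x : G) : gmul x gone = x.
Proof. rewrite <- (gmul_Vl G x), gmul_assoc, mulV, gmul_1l. reflexivity. Qed.

Definition arrow (S : list G) (x y : G) := exists a, In a S /\ y = gmul x a.

Lemma vertex_arrow S g : link_vertex G S g -> arrow S gone g \/ arrow S g gone.
Proof.
  intros [s [Hs [E|E]]].
  - left. exists s. split; auto. rewrite gmul_1l. auto.
  - right. exists s. split; auto. rewrite E, gmul_Vl. auto.
Qed.

Lemma edge_arrow S g h : link_edge G S g h -> arrow S g h \/ arrow S h g.
Proof.
  intros [_ [_ [a [Ha [E|E]]]]].
  - left. exists a. auto.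
  - right. exists a. auto.
Qed.

Lemma P0 S : (forall a b c, In a S -> In b S -> In c S -> gmul (gmul a b) c <> gone) ->
  forall x y z, arrow S x y -> arrow S y z -> arrow S z x -> False.
Proof.
  intros H x y z [a [Ha Ey]] [b [Hb Ez]] [c [Hc Ex]].
  apply (H a b c Ha Hb Hc). apply (lcancel x). rewrite mul1.
  rewrite Ez, Ey in Ex. rewrite !gmul_assoc. symmetry. exact Ex.
Qed.

Lemma P1 S : (forall a b c, In a S -> In b S -> In c S -> In (gmul (gmul a b) c) S ->
     In (gmul a b) S /\ In (gmul b c) S) ->
  forall x y z w, arrow S x y -> arrow S y z -> arrow S z w -> arrow S x w ->
  arrow S x z /\ arrow S y w.
Proof.
  intros H x y z w [a [Ha Ey]] [b [Hb Ez]] [c [Hc Ew]] [d [Hd Ew']].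
  assert (Hd' : d = gmul (gmul a b) c).
  { apply (lcancel x). rewrite <- Ew'. rewrite Ew, Ez, Ey, !gmul_assoc. reflexivity. }
  subst d. destruct (H a b c Ha Hb Hc Hd) as [H1 H2]. split.
  - exists (gmul a b). split; auto. rewrite Ez, Ey, gmul_assoc. reflexivity.
  - exists (gmul b c). split; auto. rewrite Ew, Ez, gmul_assoc. reflexivity.
Qed.

End Aux.

Ltac finish T0 T1 :=
  match goal with
  | A : arrow _ _ ?x ?y, B : arrow _ _ ?y ?z, C : arrow _ _ ?z ?x |- _ =>
      exact (T0 _ _ _ A B C)
  | A : arrow _ _ ?x ?y, B : arrow _ _ ?y ?z, C : arrow _ _ ?z ?w, D : arrow _ _ ?x ?w |- _ =>
      let X := fresh in let Y := fresh in
      destruct (T1 _ _ _ _ A B C D) as [X Y];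
      match goal with
      | X0 : arrow _ _ ?a ?b, N : arrow _ _ ?a ?b -> False |- _ => exact (N X0)
      end
  end.

Theorem mainTheorem3 (G : Group) (S : list G) :
  restricted_triangular G S ->
  forall c : nat -> G, embedded_cycle G S 5 c -> has_diagonal G S 5 c.
Proof.
  intros [_ [_ [H3 H4]]] c [_ [Hv [_ He]]].
  apply NNPP; intro ND.
  assert (Nd : forall i j, i < 5 -> j < 5 -> i <> j -> j <> (i + 1) mod 5 ->
     i <> (j + 1) mod 5 -> arrow G S (c i) (c j) -> False).
  { intros i j Hi Hj Hij H1 H2 [a [Ha E]]. apply ND. exists i, j.
    repeat split; auto. exists a. auto. }
  assert (N02 : arrow G S (c 0) (c 2) -> False) by (apply Nd; cbv; lia).
  assert (N20 : arrow G S (c 2) (c 0) -> False) by (apply Nd; cbv; lia).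
  assert (N03 : arrow G S (c 0) (c 3) -> False) by (apply Nd; cbv; lia).
  assert (N30 : arrow G S (c 3) (c 0) -> False) by (apply Nd; cbv; lia).
  assert (N13 : arrow G S (c 1) (c 3) -> False) by (apply Nd; cbv; lia).
  assert (N31 : arrow G S (c 3) (c 1) -> False) by (apply Nd; cbv; lia).
  assert (N14 : arrow G S (c 1) (c 4) -> False) by (apply Nd; cbv; lia).
  assert (N41 : arrow G S (c 4) (c 1) -> False) by (apply Nd; cbv; lia).
  assert (N24 : arrow G S (c 2) (c 4) -> False) by (apply Nd; cbv; lia).
  assert (N42 : arrow G S (c 4) (c 2) -> False) by (apply Nd; cbv; lia).
  assert (E0 : arrow G S (c 0) (c 1) \/ arrow G S (c 1) (c 0)) by exact (edge_arrow _ _ _ _ (He 0 ltac:(lia))).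
  assert (E1 : arrow G S (c 1) (c 2) \/ arrow G S (c 2) (c 1)) by exact (edge_arrow _ _ _ _ (He 1 ltac:(lia))).
  assert (E2 : arrow G S (c 2) (c 3) \/ arrow G S (c 3) (c 2)) by exact (edge_arrow _ _ _ _ (He 2 ltac:(lia))).
  assert (E3 : arrow G S (c 3) (c 4) \/ arrow G S (c 4) (c 3)) by exact (edge_arrow _ _ _ _ (He 3 ltac:(lia))).
  assert (E4 : arrow G S (c 4) (c 0) \/ arrow G S (c 0) (c 4)) by exact (edge_arrow _ _ _ _ (He 4 ltac:(lia))).
  assert (V0 := vertex_arrow _ _ _ (Hv 0 ltac:(lia))).
  assert (V1 := vertex_arrow _ _ _ (Hv 1 ltac:(lia))).
  assert (V2 := vertex_arrow _ _ _ (Hv 2 ltac:(lia))).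
  assert (V3 := vertex_arrow _ _ _ (Hv 3 ltac:(lia))).
  assert (V4 := vertex_arrow _ _ _ (Hv 4 ltac:(lia))).
  pose proof (P0 G S H3) as T0. pose proof (P1 G S H4) as T1.
  clear Nd ND He Hv H3 H4.
  destruct E0 as [E0|E0]; destruct E1 as [E1|E1]; destruct E2 as [E2|E2];
  destruct E3 as [E3|E3]; destruct E4 as [E4|E4];
  destruct V0 as [V0|V0]; destruct V1 as [V1|V1]; destruct V2 as [V2|V2];
  destruct V3 as [V3|V3]; destruct V4 as [V4|V4];
  finish T0 T1.
Qed.
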